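(* For every $\vec x\in\mathfrak{x}$, let $\vec{\rho_x}(\vec x)=(\rho_x(x_1),\dots,\rho_x(x_{K-1}))\in\mathbb{R}^{K-1}$ and let $\vec v(\vec x)\in\mathbb{R}^{K-1}$ be defined by $\mathrm{W}\vec v(\vec x)=\partial_{\vec x}\mathbf{A}_{\boldsymbol\xi}(\vec x)$. Then the residual $\nu=\vec v(\vec x)-\vec{\rho_x}(\vec x)$ satisfies $$\nu^T\mathrm{W}\nu\le C\kappa^2\alpha(\boldsymbol\xi)M\,\overline\delta(\vec x)^2,$$ with some universal constant $C$.
   Context: $I=[a,b]$, $M>0$. Mesh $\boldsymbol\xi=(\xi_0,\dots,\xi_K)$ with $0=\xi_0<\dots<\xi_K=M$, $\delta_k=\xi_k-\xi_{k-1}$, $\alpha(\boldsymbol\xi)=\max_k\delta_k/\min_k\delta_k$. $\mathfrak{x}=\{\vec x=(x_1,\dots,x_{K-1}):a<x_1<\dots<x_{K-1}<b\}$ with $x_0=a$, $x_K=b$, and $\overline\delta(\vec x)=\max_k(x_k-x_{k-1})$. $\theta_0,\dots,\theta_K$ are the piecewise linear hat functions on $[0,M]$ with $\theta_k(\xi_m)=1$ if $m=k$ and $0$ otherwise; $\mathbf{X}_{\boldsymbol\xi}[\vec x]=\sum_{k=0}^Kx_k\theta_k$. $\mathrm{W}$ is the symmetric tridiagonal $(K-1)\times(K-1)$ matrix with $\mathrm{W}_{k,k}=\frac13(\delta_k+\delta_{k+1})$, $\mathrm{W}_{k,k+1}=\mathrm{W}_{k+1,k}=\frac16\delta_{k+1}$.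 $\rho\in C^\infty(I)$ with $\rho_x(a)=\rho_x(b)=0$, and $\kappa>0$ with $|\rho_x|,|\rho_{xx}|,|\rho_{xxx}|\le\kappa$ on $I$. $\mathbf{A}_{\boldsymbol\xi}(\vec x)=\int_0^M\rho(\mathbf{X}_{\boldsymbol\xi}[\vec x](\xi))\,d\xi$, so $[\partial_{\vec x}\mathbf{A}_{\boldsymbol\xi}(\vec x)]_k=\int_0^M\rho_x(\mathbf{X}_{\boldsymbol\xi}[\vec x])\theta_k\,d\xi$. *)

(* Defs.v *)
From Stdlib Require Import Reals Lra Arith.
From Coquelicot Require Export Coquelicot.
Export Rdefinitions.
Open Scope R_scope.

Definition delta (xi : nat -> R) (k : nat) : R := xi k - xi (k - 1)%nat.

Fixpoint maxupto (f : nat -> R) (n : nat) : R :=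
  match n with O => f O | S p => Rmax (maxupto f p) (f (S p)) end.
Fixpoint minupto (f : nat -> R) (n : nat) : R :=
  match n with O => f O | S p => Rmin (minupto f p) (f (S p)) end.

Definition alpha (xi : nat -> R) (K : nat) : R :=
  maxupto (fun k => delta xi (S k)) (K - 1) / minupto (fun k => delta xi (S k)) (K - 1).

Definition dbar (x : nat -> R) (K : nat) : R :=
  maxupto (fun k => x (S k) - x k) (K - 1).

(* hat functions theta_k on [0, M] (correct values on [0, xi K]) *)
Definition hat (xi : nat -> R) (K k : nat) (s : R) : R :=
  if (k =? 0)%nat then Rmax 0 ((xi 1%nat - s) / (xi 1%nat - xi 0%nat))
  else if (k =? K)%nat then Rmax 0 ((s - xi (K - 1)%nat) / (xi K - xi (K - 1)%nat))
  else Rmax 0 (Rmin ((s - xi (k - 1)%nat) / (xi k - xi (k - 1)%nat))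
                    ((xi (S k) - s) / (xi (S k) - xi k))).

Definition Xmap (xi : nat -> R) (K : nat) (x : nat -> R) (s : R) : R :=
  sum_n_m (fun k => x k * hat xi K k s) 0 K.

(* [d_x A_xi(x)]_k = int_0^M rho_x(X_xi[x](s)) theta_k(s) ds, with M = xi K *)
Definition gradA (rho : R -> R) (xi : nat -> R) (K : nat) (x : nat -> R) (k : nat) : R :=
  RInt (fun s => Derive rho (Xmap xi K x s) * hat xi K k s) 0 (xi K).

(* entries of the tridiagonal matrix W (indices 1..K-1) *)
Definition Wmat (xi : nat -> R) (i j : nat) : R :=
  if (i =? j)%nat then (delta xi i + delta xi (S i)) / 3
  else if (j =? S i)%nat then delta xi (S i) / 6
  else if (i =? S j)%nat then delta xi i / 6
  else 0.

(* Main.v *)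
Require Import Defs.
From Stdlib Require Import Reals Lra Lia Psatz Arith.
From Coquelicot Require Import Coquelicot.
Open Scope R_scope.

Fixpoint ms1 (f : nat -> R) (n : nat) : R :=
  match n with O => 0 | S p => ms1 f p + f (S p) end.
Fixpoint ms0 (f : nat -> R) (n : nat) : R :=
  match n with O => f O | S p => ms0 f p + f (S p) end.

Lemma sum1_ms1 f n : sum_n_m f 1 n = ms1 f n.
Proof.
  induction n.
  - rewrite sum_n_m_zero; [reflexivity| lia].
  - rewrite sum_n_Sm by lia. rewrite IHn. reflexivity.
Qed.

Lemma sum0_ms0 f n : sum_n_m f 0 n = ms0 f n.
Proof.
  induction n.
  - rewrite sum_n_n. reflexivity.
  - rewrite sum_n_Sm by lia. rewrite IHn. reflexivity.
Qed.

Lemma ms1_ext f g n : (forall j, (1 <= j <= n)%nat -> f j = g j) -> ms1 f n = ms1 g n.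
Proof. induction n; intros H; simpl; auto. rewrite IHn, H; [auto|lia|intros; apply H; lia]. Qed.
Lemma ms0_ext f g n : (forall j, (j <= n)%nat -> f j = g j) -> ms0 f n = ms0 g n.
Proof. induction n; intros H; simpl; auto. rewrite IHn, H; [auto|lia|intros; apply H; lia]. Qed.
Lemma ms1_le f g n : (forall j, (1 <= j <= n)%nat -> f j <= g j) -> ms1 f n <= ms1 g n.
Proof. induction n; intros H; simpl. lra. assert (f (S n) <= g (S n)) by (apply H; lia).
  assert (ms1 f n <= ms1 g n) by (apply IHn; intros; apply H; lia). lra. Qed.
Lemma ms1_plus f g n : ms1 (fun j => f j + g j) n = ms1 f n + ms1 g n.
Proof. induction n; simpl. lra. rewrite IHn. lra. Qed.
Lemma ms0_plus f g n : ms0 (fun j => f j + g j) n = ms0 f n + ms0 g n.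
Proof. induction n; simpl. lra. rewrite IHn. lra. Qed.
Lemma ms1_scal c f n : ms1 (fun j => c * f j) n = c * ms1 f n.
Proof. induction n; simpl. lra. rewrite IHn. lra. Qed.
Lemma ms1_minus f g n : ms1 (fun j => f j - g j) n = ms1 f n - ms1 g n.
Proof. induction n; simpl. lra. rewrite IHn. lra. Qed.
Lemma ms1_swap f n m :
  ms1 (fun i => ms1 (fun j => f i j) n) m = ms1 (fun j => ms1 (fun i => f i j) m) n.
Proof. induction m; simpl.
  - induction n; simpl; lra.
  - rewrite IHm, <- ms1_plus. reflexivity. Qed.
Lemma ms1_ind p c n :
  ms1 (fun j => if (j =? p)%nat then c else 0) n = if andb (1 <=? p)%nat (p <=? n)%nat then c else 0.
Proof. induction n; cbn [ms1].
  - destruct (Nat.leb_spec 1 p); destruct (Nat.leb_spec p 0); try lia; simpl; lra.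
  - rewrite IHn. destruct (Nat.eqb_spec (S n) p).
    + subst. destruct (Nat.leb_spec 1 (S n)); destruct (Nat.leb_spec (S n) n);
      destruct (Nat.leb_spec (S n) (S n)); try lia; simpl; lra.
    + destruct (Nat.leb_spec 1 p); destruct (Nat.leb_spec p n);
      destruct (Nat.leb_spec p (S n)); try lia; simpl; lra.
Qed.
Lemma ms0_ind p c n : (p <= n)%nat ->
  ms0 (fun j => if (j =? p)%nat then c else 0) n = c.
Proof. induction n; intros H; cbn [ms0].
  - replace p with 0%nat by lia. reflexivity.
  - destruct (Nat.eqb_spec (S n) p).
    + subst. rewrite ms0_ext with (g := fun _ => 0).
      * clear. induction n; cbn [ms0]; lra.
      * intros. destruct (Nat.eqb_spec j (S n)); [lia|auto].
    + rewrite IHn by lia. lra.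
Qed.

Lemma dpos y d : 0<d -> 0<=y -> 0 <= y/d.
Proof. intros. set (t := y/d). assert (t*d = y) by (unfold t; field; lra). nra. Qed.
Lemma dneg y d : 0<d -> y<=0 -> y/d <= 0.
Proof. intros. set (t := y/d). assert (t*d = y) by (unfold t; field; lra). nra. Qed.
Lemma dle1 y d : 0<d -> y<=d -> y/d <= 1.
Proof. intros. set (t := y/d). assert (t*d = y) by (unfold t; field; lra). nra. Qed.
Lemma dge1 y d : 0<d -> d<=y -> 1 <= y/d.
Proof. intros. set (t := y/d). assert (t*d = y) by (unfold t; field; lra). nra. Qed.

Lemma mono_le (xi : nat -> R) K : (forall k, (k<K)%nat -> xi k < xi (S k)) ->
  forall i j, (i <= j <= K)%nat -> xi i <= xi j.
Proof. intros H i j. induction j; intros Hj.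
  - replace i with 0%nat by lia. lra.
  - destruct (Nat.eq_dec i (S j)). subst; lra.
    assert (xi i <= xi j) by (apply IHj; lia). assert (xi j < xi (S j)) by (apply H; lia). lra.
Qed.
Lemma mono_lt (xi : nat -> R) K : (forall k, (k<K)%nat -> xi k < xi (S k)) ->
  forall i j, (i < j <= K)%nat -> xi i < xi j.
Proof. intros H i j Hj. destruct j. lia.
  assert (xi i <= xi j) by (apply (mono_le xi K H); lia). assert (xi j < xi (S j)) by (apply H; lia). lra.
Qed.

Lemma hat_piece xi K k j s : (forall k, (k<K)%nat -> xi k < xi (S k)) ->
  (1 <= k <= K)%nat -> (j <= K)%nat -> xi (k-1)%nat <= s <= xi k ->
  hat xi K j s = if (j =? k)%nat then (s - xi (k-1)%nat)/(xi k - xi (k-1)%nat)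
                 else if (j =? k-1)%nat then (xi k - s)/(xi k - xi (k-1)%nat) else 0.
Proof.
  intros Hm Hk Hj Hs.
  assert (Hle := mono_le xi K Hm). assert (Hlt := mono_lt xi K Hm).
  assert (Hd : 0 < xi k - xi (k-1)%nat) by (assert (xi (k-1)%nat < xi k) by (apply Hlt; lia); lra).
  unfold hat.
  destruct (Nat.eqb_spec j 0) as [E0|E0].
  - subst j. destruct (Nat.eqb_spec 0 k) as [Ea|Ea]; [lia|].
    destruct (Nat.eqb_spec 0 (k-1)) as [E1|E1].
    + assert (k = 1%nat) by lia. subst k. change (1-1)%nat with 0%nat in *.
      apply Rmax_right. apply dpos; lra.
    + assert (xi 1%nat <= xi (k-1)%nat) by (apply Hle; lia).
      apply Rmax_left. assert (0 < xi 1%nat - xi 0%nat) by (assert (xi 0%nat < xi 1%nat) by (apply Hlt; lia); lra).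
      apply dneg; lra.
  - destruct (Nat.eqb_spec j K) as [EK|EK].
    + subst j. destruct (Nat.eqb_spec K k) as [EKk|EKk].
      * subst k. apply Rmax_right. apply dpos; lra.
      * destruct (Nat.eqb_spec K (k-1)); [lia|].
        assert (xi k <= xi (K-1)%nat) by (apply Hle; lia).
        assert (0 < xi K - xi (K-1)%nat) by (assert (xi (K-1)%nat < xi K) by (apply Hlt; lia); lra).
        apply Rmax_left. apply dneg; lra.
    + assert (Hd1 : 0 < xi j - xi (j-1)%nat) by (assert (xi (j-1)%nat < xi j) by (apply Hlt; lia); lra).
      assert (Hd2 : 0 < xi (S j) - xi j) by (assert (xi j < xi (S j)) by (apply Hlt; lia); lra).
      destruct (Nat.eqb_spec j k) as [Ejk|Ejk].
      * subst j. assert (xi (S k) - s >= xi (S k) - xi k) by lra.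
        assert (H1 : (s - xi (k - 1)%nat) / (xi k - xi (k - 1)%nat) <= 1) by (apply dle1; lra).
        assert (H2 : 1 <= (xi (S k) - s) / (xi (S k) - xi k)) by (apply dge1; lra).
        rewrite Rmin_left by lra. apply Rmax_right. apply dpos; lra.
      * destruct (Nat.eqb_spec j (k-1)) as [Ejk1|Ejk1].
        -- assert (Sk : S j = k) by lia. rewrite Sk. rewrite <- Ejk1 in *.
           assert (H1 : 1 <= (s - xi (j - 1)%nat) / (xi j - xi (j - 1)%nat)) by (apply dge1; lra).
           assert (H2 : (xi k - s) / (xi k - xi j) <= 1) by (apply dle1; lra).
           rewrite Rmin_right by lra. apply Rmax_right. apply dpos; lra.
        -- destruct (Nat.lt_ge_cases k j).
           ++ assert (xi k <= xi (j-1)%nat) by (apply Hle; lia).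
              assert (H1 : (s - xi (j - 1)%nat) / (xi j - xi (j - 1)%nat) <= 0) by (apply dneg; lra).
              apply Rmax_left. pose proof (Rmin_l ((s - xi (j - 1)%nat) / (xi j - xi (j - 1)%nat))
                 ((xi (S j) - s) / (xi (S j) - xi j))). lra.
           ++ assert (xi (S j) <= xi (k-1)%nat) by (apply Hle; lia).
              assert (H1 : (xi (S j) - s) / (xi (S j) - xi j) <= 0) by (apply dneg; lra).
              apply Rmax_left. pose proof (Rmin_r ((s - xi (j - 1)%nat) / (xi j - xi (j - 1)%nat))
                 ((xi (S j) - s) / (xi (S j) - xi j))). lra.
Qed.

Lemma hat_zero_left xi K i s : (forall k, (k<K)%nat -> xi k < xi (S k)) ->
  (1 <= i <= K-1)%nat -> s <= xi (i-1)%nat -> hat xi K i s = 0.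
Proof. intros Hm Hi Hs. assert (Hlt := mono_lt xi K Hm).
  assert (Hd1 : 0 < xi i - xi (i-1)%nat) by (assert (xi (i-1)%nat < xi i) by (apply Hlt; lia); lra).
  unfold hat. destruct (Nat.eqb_spec i 0); [lia|]. destruct (Nat.eqb_spec i K); [lia|].
  assert (H1 : (s - xi (i - 1)%nat) / (xi i - xi (i - 1)%nat) <= 0) by (apply dneg; lra).
  apply Rmax_left. pose proof (Rmin_l ((s - xi (i - 1)%nat) / (xi i - xi (i - 1)%nat))
                 ((xi (S i) - s) / (xi (S i) - xi i))). lra.
Qed.
Lemma hat_zero_right xi K i s : (forall k, (k<K)%nat -> xi k < xi (S k)) ->
  (1 <= i <= K-1)%nat -> xi (S i) <= s -> hat xi K i s = 0.
Proof. intros Hm Hi Hs. assert (Hlt := mono_lt xi K Hm).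
  assert (Hd1 : 0 < xi (S i) - xi i) by (assert (xi i < xi (S i)) by (apply Hlt; lia); lra).
  unfold hat. destruct (Nat.eqb_spec i 0); [lia|]. destruct (Nat.eqb_spec i K); [lia|].
  assert (H1 : (xi (S i) - s) / (xi (S i) - xi i) <= 0) by (apply dneg; lra).
  apply Rmax_left. pose proof (Rmin_r ((s - xi (i - 1)%nat) / (xi i - xi (i - 1)%nat))
                 ((xi (S i) - s) / (xi (S i) - xi i))). lra.
Qed.

Lemma Xmap_piece xi K x k s : (forall k, (k<K)%nat -> xi k < xi (S k)) ->
  (1 <= k <= K)%nat -> xi (k-1)%nat <= s <= xi k ->
  Xmap xi K x s = x (k-1)%nat * ((xi k - s)/(xi k - xi (k-1)%nat))
                + x k * ((s - xi (k-1)%nat)/(xi k - xi (k-1)%nat)).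
Proof. intros Hm Hk Hs. unfold Xmap. rewrite sum0_ms0.
  rewrite ms0_ext with (g := fun j =>
     (if (j =? k)%nat then x k * ((s - xi (k-1)%nat)/(xi k - xi (k-1)%nat)) else 0)
   + (if (j =? k-1)%nat then x (k-1)%nat * ((xi k - s)/(xi k - xi (k-1)%nat)) else 0)).
  - rewrite ms0_plus, ms0_ind, ms0_ind by lia. ring.
  - intros j Hj. rewrite (hat_piece xi K k j s Hm Hk Hj Hs).
    destruct (Nat.eqb_spec j k); destruct (Nat.eqb_spec j (k-1)); try lia; subst; ring.
Qed.
Lemma ex2 rho t : ex_derive_n rho 2 t -> ex_derive (Derive rho) t.
Proof. simpl. intros H. exact H. Qed.
Lemma d2 rho t : Derive_n rho 2 t = Derive (Derive rho) t.
Proof. reflexivity. Qed.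

Lemma D_cont rho a b : (forall n t, a<=t<=b -> ex_derive_n rho n t) ->
  forall t, a<=t<=b -> continuous (Derive rho) t.
Proof. intros H t Ht. apply (@ex_derive_continuous R_AbsRing R_NormedModule). apply ex2. apply H; auto. Qed.

Lemma D_lip rho a b kappa : (forall n t, a<=t<=b -> ex_derive_n rho n t) ->
  (forall t, a <= t <= b -> Rabs (Derive_n rho 2 t) <= kappa) ->
  forall y z, a<=y<=b -> a<=z<=b -> Rabs (Derive rho y - Derive rho z) <= kappa * Rabs (y - z).
Proof. intros H Hk y z Hy Hz.
  destruct (MVT_gen (Derive rho) z y (Derive (Derive rho))) as [c [Hc Heq]].
  - intros u Hu. apply Derive_correct. apply ex2. apply H.
    pose proof (Rmin_l z y); pose proof (Rmin_r z y); pose proof (Rmax_l z y); pose proof (Rmax_r z y).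
    assert (Rmin z y >= a) by (unfold Rmin; destruct Rle_dec; lra).
    assert (Rmax z y <= b) by (unfold Rmax; destruct Rle_dec; lra). lra.
  - intros u Hu. apply continuity_pt_filterlim. apply (D_cont rho a b H).
    assert (Rmin z y >= a) by (unfold Rmin; destruct Rle_dec; lra).
    assert (Rmax z y <= b) by (unfold Rmax; destruct Rle_dec; lra). lra.
  - rewrite Heq. rewrite Rabs_mult. apply Rmult_le_compat_r. apply Rabs_pos.
    rewrite <- d2. apply Hk.
    assert (Rmin z y >= a) by (unfold Rmin; destruct Rle_dec; lra).
    assert (Rmax z y <= b) by (unfold Rmax; destruct Rle_dec; lra). lra.
Qed.

Lemma piece_int (D : R->R) a b kappa p q u w (phi : R -> R) Phi z :
 p < q -> u <= w -> a <= u -> w <= b ->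
 (forall t, a<=t<=b -> continuous D t) ->
 (forall y z, a<=y<=b -> a<=z<=b -> Rabs (D y - D z) <= kappa * Rabs (y-z)) -> 0 <= kappa ->
 (forall s, continuous phi s) -> (forall s, p<=s<=q -> 0 <= phi s <= 1) -> is_RInt phi p q Phi ->
 u <= z <= w ->
 ex_RInt (fun s => D (u * ((q - s)/(q-p)) + w * ((s - p)/(q-p))) * phi s) p q /\
 Rabs (RInt (fun s => D (u * ((q - s)/(q-p)) + w * ((s - p)/(q-p))) * phi s) p q - D z * Phi)
   <= kappa * (w - u) * (q - p).
Proof.
  intros Hpq Huw Hau Hwb HDc HDl Hk Hpc Hp01 HPhi Hz.
  set (A := fun s => u * ((q - s)/(q-p)) + w * ((s - p)/(q-p))).
  assert (HA : forall s, p <= s <= q -> u <= A s <= w).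
  { intros s Hs. unfold A. set (T := (s-p)/(q-p)).
    assert (E : (q-s)/(q-p) = 1 - T) by (unfold T; field; lra). rewrite E.
    assert (0 <= T) by (unfold T; set (t := (s-p)/(q-p)); assert (t*(q-p) = s-p) by (unfold t; field; lra); nra).
    assert (T <= 1) by (unfold T; set (t := (s-p)/(q-p)); assert (t*(q-p) = s-p) by (unfold t; field; lra); nra).
    split; nra. }
  assert (HAc : forall s, continuous A s).
  { intros s. apply (@ex_derive_continuous R_AbsRing R_NormedModule). unfold A. auto_derive. lra. }
  assert (Hfc : forall s, p <= s <= q -> continuous (fun s => D (A s) * phi s) s).
  { intros s Hs. apply (continuous_mult (fun s => D (A s)) phi).
    - apply (continuous_comp A D). apply HAc. apply HDc. pose proof (HA s Hs). lra.
    - apply Hpc. }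
  assert (Hex : ex_RInt (fun s => D (A s) * phi s) p q).
  { apply (@ex_RInt_continuous R_CompleteNormedModule). intros s. rewrite Rmin_left, Rmax_right by lra. apply Hfc. }
  split; [exact Hex|].
  assert (Hex2 : ex_RInt (fun s => D z * phi s) p q).
  { apply (ex_RInt_scal phi p q (D z)). exists Phi; exact HPhi. }
  assert (E2 : RInt (fun s => D z * phi s) p q = D z * Phi).
  { apply is_RInt_unique. apply (is_RInt_scal phi p q (D z) Phi HPhi). }
  assert (E1 : RInt (fun s => (D (A s) - D z) * phi s) p q
             = RInt (fun s => D (A s) * phi s) p q - RInt (fun s => D z * phi s) p q).
  { rewrite (@RInt_ext R_CompleteNormedModule _ (fun s => minus (D (A s) * phi s) (D z * phi s))).
    - exact (@RInt_minus R_CompleteNormedModule _ _ p q Hex Hex2).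
    - intros x _. unfold minus, plus, opp; simpl. ring. }
  change (Rabs (RInt (fun s => D (A s) * phi s) p q - D z * Phi) <= kappa * (w - u) * (q - p)). rewrite <- E2, <- E1.
  replace (kappa * (w - u) * (q - p)) with ((q - p) * (kappa * (w - u))) by ring.
  apply (abs_RInt_le_const (fun s => (D (A s) - D z) * phi s) p q). lra.
  - apply (ex_RInt_ext (fun s => minus (D (A s) * phi s) (D z * phi s))).
    + intros x _. unfold minus, plus, opp; simpl. ring.
    + apply (@ex_RInt_minus R_NormedModule); assumption.
  - intros t Ht. rewrite Rabs_mult. pose proof (HA t Ht). pose proof (Hp01 t Ht).
    assert (Rabs (D (A t) - D z) <= kappa * Rabs (A t - z)) by (apply HDl; lra).
    assert (Rabs (A t - z) <= w - u) by (apply Rabs_le; lra).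
    rewrite (Rabs_right (phi t)) by lra.
    assert (0 <= Rabs (D (A t) - D z)) by apply Rabs_pos.
    assert (Rabs (D (A t) - D z) * phi t <= Rabs (D (A t) - D z) * 1) by (apply Rmult_le_compat_l; lra).
    assert (kappa * Rabs (A t - z) <= kappa * (w - u)) by (apply Rmult_le_compat_l; lra).
    lra.
Qed.
Lemma int_up p q : p < q -> is_RInt (fun s => (s - p)/(q-p)) p q ((q-p)/2).
Proof. intros H.
  replace ((q-p)/2) with (minus ((fun s => (s-p)^2/(2*(q-p))) q) ((fun s => (s-p)^2/(2*(q-p))) p)).
  - apply (@is_RInt_derive R_CompleteNormedModule (fun s => (s-p)^2/(2*(q-p))) (fun s => (s - p)/(q-p))).
    + intros x _. auto_derive. lra. field. lra.
    + intros x _. apply (@ex_derive_continuous R_AbsRing R_NormedModule). auto_derive. lra.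
  - unfold minus, plus, opp; simpl. field. lra.
Qed.
Lemma int_down p q : p < q -> is_RInt (fun s => (q - s)/(q-p)) p q ((q-p)/2).
Proof. intros H.
  replace ((q-p)/2) with (minus ((fun s => -(q-s)^2/(2*(q-p))) q) ((fun s => -(q-s)^2/(2*(q-p))) p)).
  - apply (@is_RInt_derive R_CompleteNormedModule (fun s => -(q-s)^2/(2*(q-p))) (fun s => (q - s)/(q-p))).
    + intros x _. auto_derive. lra. field. lra.
    + intros x _. apply (@ex_derive_continuous R_AbsRing R_NormedModule). auto_derive. lra.
  - unfold minus, plus, opp; simpl. field. lra.
Qed.

Lemma ext_piece (g h : R -> R) p q : p <= q -> (forall s, p < s < q -> g s = h s) ->
  ex_RInt h p q -> ex_RInt g p q /\ RInt g p q = RInt h p q.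
Proof. intros Hpq He Hh. split.
  - apply (ex_RInt_ext h). intros x Hx. rewrite Rmin_left, Rmax_right in Hx by lra. symmetry; auto. auto.
  - apply (@RInt_ext R_CompleteNormedModule). intros x Hx. rewrite Rmin_left, Rmax_right in Hx by lra. auto.
Qed.
Lemma ext_piece' (g h : R -> R) p q : ex_RInt h p q -> p <= q -> (forall s, p < s < q -> g s = h s) ->
  ex_RInt g p q /\ RInt g p q = RInt h p q.
Proof. intros; apply ext_piece; auto. Qed.
Lemma zero_piece (g : R -> R) p q : p <= q -> (forall s, p < s < q -> g s = 0) ->
  ex_RInt g p q /\ RInt g p q = 0.
Proof. intros Hpq He. destruct (ext_piece g (fun _ => 0) p q Hpq He) as [H1 H2].
  apply (@ex_RInt_const R_NormedModule). split; auto. rewrite H2.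
  rewrite (@RInt_const R_CompleteNormedModule). apply (@scal_zero_r R_Ring R_ModuleSpace).
Qed.

Lemma gradA_est rho a b kappa xi K x i :
  (forall k, (k<K)%nat -> xi k < xi (S k)) -> xi 0%nat = 0 ->
  (forall k, (k<K)%nat -> x k < x (S k)) -> x 0%nat = a -> x K = b ->
  (forall t, a<=t<=b -> continuous (Derive rho) t) ->
  (forall y z, a<=y<=b -> a<=z<=b -> Rabs (Derive rho y - Derive rho z) <= kappa * Rabs (y-z)) ->
  0 <= kappa -> (1 <= i <= K-1)%nat ->
  Rabs (gradA rho xi K x i - Derive rho (x i) * delta xi i / 2 - Derive rho (x i) * delta xi (S i) / 2)
   <= kappa * (x i - x (i-1)%nat) * delta xi i + kappa * (x (S i) - x i) * delta xi (S i).
Proof.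
  intros Hm H0 Hxm Hx0 HxK HDc HDl Hk Hi.
  assert (Hle := mono_le xi K Hm). assert (Hlt := mono_lt xi K Hm).
  assert (Hxle := mono_le x K Hxm). assert (Hxlt := mono_lt x K Hxm).
  set (g := fun s => Derive rho (Xmap xi K x s) * hat xi K i s).
  unfold gradA. fold g.
  assert (A0 : 0 <= xi (i-1)%nat) by (rewrite <- H0; apply Hle; lia).
  assert (A1 : xi (i-1)%nat < xi i) by (apply Hlt; lia).
  assert (A2 : xi i < xi (S i)) by (apply Hlt; lia).
  assert (A3 : xi (S i) <= xi K) by (apply Hle; lia).
  assert (B0 : a <= x (i-1)%nat) by (rewrite <- Hx0; apply Hxle; lia).
  assert (B1 : x (i-1)%nat < x i) by (apply Hxlt; lia).
  assert (B2 : x i < x (S i)) by (apply Hxlt; lia).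
  assert (B3 : x (S i) <= b) by (rewrite <- HxK; apply Hxle; lia).
  destruct (zero_piece g 0 (xi (i-1)%nat)) as [Z1e Z1]; [lra| |].
  { intros s Hs. unfold g. rewrite (hat_zero_left xi K i s Hm Hi) by lra. ring. }
  destruct (zero_piece g (xi (S i)) (xi K)) as [Z3e Z3]; [lra| |].
  { intros s Hs. unfold g. rewrite (hat_zero_right xi K i s Hm Hi) by lra. ring. }
  destruct (piece_int (Derive rho) a b kappa (xi (i-1)%nat) (xi i) (x (i-1)%nat) (x i)
     (fun s => (s - xi (i-1)%nat)/(xi i - xi (i-1)%nat)) ((xi i - xi (i-1)%nat)/2) (x i))
    as [P1e P1]; try lra; auto.
  { intros s. apply (@ex_derive_continuous R_AbsRing R_NormedModule). auto_derive. lra. }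
  { intros s Hs. split. apply dpos; lra. apply dle1; lra. }
  { apply int_up. lra. }
  destruct (ext_piece' g _ _ _ P1e) as [Q1e Q1]; [lra| |].
  { intros s Hs. unfold g. rewrite (Xmap_piece xi K x i s Hm) by lia || lra.
    rewrite (hat_piece xi K i i s Hm) by lia || lra. rewrite Nat.eqb_refl. reflexivity. }
  destruct (piece_int (Derive rho) a b kappa (xi i) (xi (S i)) (x i) (x (S i))
     (fun s => (xi (S i) - s)/(xi (S i) - xi i)) ((xi (S i) - xi i)/2) (x i))
    as [P2e P2]; try lra; auto.
  { intros s. apply (@ex_derive_continuous R_AbsRing R_NormedModule). auto_derive. lra. }
  { intros s Hs. split. apply dpos; lra. apply dle1; lra. }
  { apply int_down. lra. }
  destruct (ext_piece' g _ _ _ P2e) as [Q2e Q2]; [lra| |].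
  { intros s Hs. unfold g.
    assert (Hs' : xi (S i - 1)%nat <= s <= xi (S i)) by (replace (S i - 1)%nat with i by lia; lra).
    rewrite (Xmap_piece xi K x (S i) s Hm) by (lia || lra).
    rewrite (hat_piece xi K (S i) i s Hm) by (lia || lra).
    destruct (Nat.eqb_spec i (S i)); [lia|]. destruct (Nat.eqb_spec i (S i - 1)); [|lia].
    replace (S i - 1)%nat with i by lia. reflexivity. }
  assert (E23 : ex_RInt g (xi i) (xi K)) by (apply (ex_RInt_Chasles g _ (xi (S i))); auto).
  assert (E13 : ex_RInt g (xi (i-1)%nat) (xi K)) by (apply (ex_RInt_Chasles g _ (xi i)); auto).
  assert (C1 : RInt g 0 (xi K) = RInt g 0 (xi (i-1)%nat) + RInt g (xi (i-1)%nat) (xi K))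
    by (symmetry; exact (@RInt_Chasles R_CompleteNormedModule g _ _ _ Z1e E13)).
  assert (C2 : RInt g (xi (i-1)%nat) (xi K) = RInt g (xi (i-1)%nat) (xi i) + RInt g (xi i) (xi K))
    by (symmetry; exact (@RInt_Chasles R_CompleteNormedModule g _ _ _ Q1e E23)).
  assert (C3 : RInt g (xi i) (xi K) = RInt g (xi i) (xi (S i)) + RInt g (xi (S i)) (xi K))
    by (symmetry; exact (@RInt_Chasles R_CompleteNormedModule g _ _ _ Q2e Z3e)).
  rewrite C1, C2, C3, Z1, Z3, Q1, Q2.
  unfold delta. replace (S i - 1)%nat with i by lia.
  set (I1 := RInt _ (xi (i-1)%nat) (xi i)) in *.
  set (I2 := RInt _ (xi i) (xi (S i))) in *.
  replace (0 + (I1 + (I2 + 0)) - Derive rho (x i) * (xi i - xi (i - 1)%nat) / 2 -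
    Derive rho (x i) * (xi (S i) - xi i) / 2) with
    ((I1 - Derive rho (x i) * ((xi i - xi (i - 1)%nat) / 2)) +
     (I2 - Derive rho (x i) * ((xi (S i) - xi i) / 2))) by field.
  eapply Rle_trans; [apply Rabs_triang|]. apply Rplus_le_compat; assumption.
Qed.

Lemma gersh (Wm : nat -> nat -> R) (nu : nat -> R) n : (forall i j, i<>j -> Wm i j = Wm j i) ->
 ms1 (fun i => nu i ^2 * (Wm i i - ms1 (fun j => if (i =? j)%nat then 0 else Rabs (Wm i j)) n)) n
 <= ms1 (fun i => ms1 (fun j => nu i * Wm i j * nu j) n) n.
Proof.
  intros Hsym.
  set (Oo := fun i j => if (i =? j)%nat then 0 else Rabs (Wm i j)).
  assert (HO : forall i j, Oo i j = Oo j i).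
  { intros i j. unfold Oo. destruct (Nat.eqb_spec i j); destruct (Nat.eqb_spec j i); try lia; auto.
    rewrite Hsym; auto. }
  set (Ss := fun i => ms1 (fun j => Oo i j) n).
  assert (Step : ms1 (fun i => ms1 (fun j =>
       (if (j =? i)%nat then Wm i i * nu i ^ 2 else 0) - Oo i j * nu i ^ 2 / 2 - Oo i j * nu j ^ 2 / 2) n) n
      <= ms1 (fun i => ms1 (fun j => nu i * Wm i j * nu j) n) n).
  { apply ms1_le. intros i Hi. apply ms1_le. intros j Hj. unfold Oo.
    destruct (Nat.eqb_spec j i); destruct (Nat.eqb_spec i j); try lia.
    - subst. nra.
    - assert (W1 : Wm i j <= Rabs (Wm i j)) by apply Rle_abs.
      assert (W2 : - Wm i j <= Rabs (Wm i j)) by (rewrite <- Rabs_Ropp; apply Rle_abs).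
      destruct (Rle_dec 0 (nu i * nu j)).
      + assert (H1: 0 <= (Rabs (Wm i j) + Wm i j) * (nu i * nu j)) by (apply Rmult_le_pos; lra).
        assert (H2: 0 <= Rabs (Wm i j) * ((nu i - nu j)^2)) by (apply Rmult_le_pos; [apply Rabs_pos| apply pow2_ge_0]).
        nra.
      + assert (H1: 0 <= (Rabs (Wm i j) - Wm i j) * (- (nu i * nu j))) by (apply Rmult_le_pos; lra).
        assert (H2: 0 <= Rabs (Wm i j) * ((nu i + nu j)^2)) by (apply Rmult_le_pos; [apply Rabs_pos| apply pow2_ge_0]).
        nra. }
  assert (E : ms1 (fun i => ms1 (fun j =>
       (if (j =? i)%nat then Wm i i * nu i ^ 2 else 0) - Oo i j * nu i ^ 2 / 2 - Oo i j * nu j ^ 2 / 2) n) n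
       = ms1 (fun i => nu i ^2 * (Wm i i - Ss i)) n).
  { rewrite (ms1_ext _ (fun i => (Wm i i * nu i ^ 2 - nu i ^ 2 / 2 * Ss i)
                             - ms1 (fun j => Oo i j * nu j ^ 2 / 2) n)).
    2:{ intros i Hi. rewrite ms1_minus, ms1_minus. rewrite ms1_ind.
      destruct (Nat.leb_spec 1 i); destruct (Nat.leb_spec i n); try lia. simpl.
      unfold Ss. rewrite <- ms1_scal. f_equal. f_equal. apply ms1_ext. intros; lra. }
    rewrite ms1_minus.
    rewrite ms1_swap.
    rewrite (ms1_ext (fun j => ms1 (fun i => Oo i j * nu j ^ 2 / 2) n) (fun j => nu j ^ 2 / 2 * Ss j)).
    2:{ intros j Hj. unfold Ss. rewrite <- ms1_scal. apply ms1_ext. intros i Hi. rewrite HO. lra. }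
    rewrite <- ms1_minus. apply ms1_ext. intros j Hj. field. }
  rewrite E in Step. exact Step.
Qed.

Lemma Wmat_sym xi i j : i <> j -> Wmat xi i j = Wmat xi j i.
Proof. intros H. unfold Wmat.
  destruct (Nat.eqb_spec i j); destruct (Nat.eqb_spec j i); try lia.
  destruct (Nat.eqb_spec j (S i)); destruct (Nat.eqb_spec i (S j)); try lia; subst; reflexivity.
Qed.

Lemma Wrow xi w n i : (1 <= i <= n)%nat -> w 0%nat = 0 -> w (S n) = 0 ->
  ms1 (fun j => Wmat xi i j * w j) n =
  delta xi i / 6 * w (i-1)%nat + (delta xi i + delta xi (S i)) / 3 * w i + delta xi (S i) / 6 * w (S i).
Proof. intros Hi Hw0 HwS.
  rewrite (ms1_ext _ (fun j => (if (j =? i-1)%nat then delta xi i / 6 * w (i-1)%nat else 0)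
     + (if (j =? i)%nat then (delta xi i + delta xi (S i)) / 3 * w i else 0)
     + (if (j =? S i)%nat then delta xi (S i) / 6 * w (S i) else 0))).
  - rewrite !ms1_plus, !ms1_ind.
    destruct (Nat.leb_spec 1 (i-1)); destruct (Nat.leb_spec (i-1) n);
    destruct (Nat.leb_spec 1 i); destruct (Nat.leb_spec i n);
    destruct (Nat.leb_spec 1 (S i)); destruct (Nat.leb_spec (S i) n); try lia; simpl.
    + lra.
    + replace (S i) with (S n) by lia. rewrite HwS. lra.
    + replace (i-1)%nat with 0%nat by lia. rewrite Hw0. lra.
    + replace (i-1)%nat with 0%nat by lia. replace (S i) with (S n) by lia. rewrite Hw0, HwS. lra.
  - intros j Hj. unfold Wmat.
    destruct (Nat.eqb_spec i j); destruct (Nat.eqb_spec j (S i)); destruct (Nat.eqb_spec i (S j));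
    destruct (Nat.eqb_spec j (i-1)); destruct (Nat.eqb_spec j i); try lia; try subst j; try field.
Qed.

Lemma offdiag xi n i : (1 <= i <= n)%nat -> 0 < delta xi i -> 0 < delta xi (S i) ->
  ms1 (fun j => if (i =? j)%nat then 0 else Rabs (Wmat xi i j)) n <= delta xi i / 6 + delta xi (S i) / 6.
Proof. intros Hi H1 H2.
  eapply Rle_trans.
  - apply (ms1_le _ (fun j => (if (j =? S i)%nat then delta xi (S i)/6 else 0)
                            + (if (j =? i-1)%nat then delta xi i/6 else 0))).
    intros j Hj. unfold Wmat.
    destruct (Nat.eqb_spec i j); destruct (Nat.eqb_spec j (S i)); destruct (Nat.eqb_spec i (S j));
    destruct (Nat.eqb_spec j (i-1)); try lia; try (rewrite Rabs_right by lra); try lra.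
  - rewrite ms1_plus, !ms1_ind.
    destruct (andb _ _); destruct (andb _ _); lra.
Qed.

Lemma maxupto_ge f n k : (k <= n)%nat -> f k <= maxupto f n.
Proof. induction n; intros H; simpl.
  - replace k with 0%nat by lia. lra.
  - destruct (Nat.eq_dec k (S n)). subst. apply Rmax_r.
    eapply Rle_trans; [apply IHn; lia| apply Rmax_l].
Qed.
Lemma minupto_le f n k : (k <= n)%nat -> minupto f n <= f k.
Proof. induction n; intros H; simpl.
  - replace k with 0%nat by lia. lra.
  - destruct (Nat.eq_dec k (S n)). subst. apply Rmin_r.
    eapply Rle_trans; [apply Rmin_l| apply IHn; lia].
Qed.
Lemma minupto_pos f n : (forall k, (k <= n)%nat -> 0 < f k) -> 0 < minupto f n.
Proof. induction n; intros H; simpl.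
  - apply H; lia.
  - unfold Rmin. destruct Rle_dec. apply IHn; intros; apply H; lia. apply H; lia.
Qed.

Lemma tele1 (xi : nat -> R) n : ms1 (fun i => xi i - xi (i-1)%nat) n = xi n - xi 0%nat.
Proof. induction n; cbn [ms1]. lra. rewrite IHn. replace (S n - 1)%nat with n by lia. lra. Qed.
Lemma tele2 (xi : nat -> R) n : ms1 (fun i => xi (S i) - xi i) n = xi (S n) - xi 1%nat.
Proof. induction n; cbn [ms1]. lra. rewrite IHn. lra. Qed.

Lemma abs_le u c : Rabs u <= c -> -c <= u <= c.
Proof. unfold Rabs; destruct Rcase_abs; lra. Qed.

Theorem lemma27 : exists C : R,
  forall (a b M : R) (K : nat) (xi : nat -> R) (rho : R -> R) (kappa : R)
         (x : nat -> R) (v : nat -> R),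
  a < b -> 0 < M -> (1 <= K)%nat ->
  xi 0%nat = 0 -> xi K = M -> (forall k, (k < K)%nat -> xi k < xi (S k)) ->
  x 0%nat = a -> x K = b -> (forall k, (k < K)%nat -> x k < x (S k)) ->
  (forall (n : nat) (t : R), a <= t <= b -> ex_derive_n rho n t) ->
  Derive rho a = 0 -> Derive rho b = 0 ->
  0 < kappa ->
  (forall t, a <= t <= b ->
     Rabs (Derive_n rho 1 t) <= kappa /\ Rabs (Derive_n rho 2 t) <= kappa /\
     Rabs (Derive_n rho 3 t) <= kappa) ->
  (forall i, (1 <= i <= K - 1)%nat ->
     sum_n_m (fun j => Wmat xi i j * v j) 1 (K - 1) = gradA rho xi K x i) ->
  let nu := fun k => v k - Derive rho (x k) in
  sum_n_m (fun i => sum_n_m (fun j => nu i * Wmat xi i j * nu j) 1 (K - 1)) 1 (K - 1)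
    <= C * kappa ^ 2 * alpha xi K * M * dbar x K ^ 2.
Proof.
  exists 48.
  intros a b M K xi rho kappa x v Hab HM HK H0 HKM Hm Hx0 HxK Hxm Hder Ha Hb Hk Hbnd HW nu.
  assert (Hcont := D_cont rho a b Hder).
  assert (Hlip := D_lip rho a b kappa Hder (fun t Ht => proj1 (proj2 (Hbnd t Ht)))).
  assert (Hle := mono_le xi K Hm). assert (Hlt := mono_lt xi K Hm).
  assert (Hxle := mono_le x K Hxm). assert (Hxlt := mono_lt x K Hxm).
  set (n := (K-1)%nat) in *.
  assert (HKn : K = S n) by (unfold n; lia).
  assert (Hxab : forall k, (k <= K)%nat -> a <= x k <= b).
  { intros k Hk'. rewrite <- Hx0, <- HxK. split; apply Hxle; lia. }
  set (rh := fun k => Derive rho (x k)).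
  assert (rh0 : rh 0%nat = 0) by (unfold rh; rewrite Hx0; exact Ha).
  assert (rhS : rh (S n) = 0) by (unfold rh; rewrite <- HKn, HxK; exact Hb).
  assert (Hdel : forall k, (1 <= k <= K)%nat -> 0 < delta xi k).
  { intros k Hk'. unfold delta. assert (xi (k-1)%nat < xi k) by (apply Hlt; lia). lra. }
  set (db := dbar x K).
  assert (HL : forall k, (k <= n)%nat -> x (S k) - x k <= db).
  { intros k Hk'. unfold db, dbar. apply (maxupto_ge (fun k => x (S k) - x k)). unfold n in *; lia. }
  assert (db0 : 0 <= db).
  { assert (x 0%nat < x 1%nat) by (apply Hxlt; lia). assert (x 1%nat - x 0%nat <= db) by (apply HL; lia). lra. }
  set (r := fun i => ms1 (fun j => Wmat xi i j * nu j) n).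
  set (Dd := fun i => delta xi i + delta xi (S i)).
  assert (Hrb : forall i, (1 <= i <= n)%nat -> Rabs (r i) <= 2 * kappa * db * Dd i).
  { intros i Hi.
    assert (Er : r i = gradA rho xi K x i -
        (delta xi i / 6 * rh (i-1)%nat + (delta xi i + delta xi (S i)) / 3 * rh i + delta xi (S i) / 6 * rh (S i))).
    { unfold r. rewrite <- (Wrow xi rh n i Hi rh0 rhS). rewrite <- HW by (unfold n in *; lia).
      rewrite sum1_ms1. rewrite <- ms1_minus. apply ms1_ext. intros j _. unfold nu, rh. ring. }
    assert (G := gradA_est rho a b kappa xi K x i Hm H0 Hxm Hx0 HxK Hcont Hlip ltac:(lra) ltac:(unfold n in *; lia)).
    assert (L1 := Hlip (x i) (x (i-1)%nat) ltac:(apply Hxab; lia) ltac:(apply Hxab; lia)).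
    assert (L2 := Hlip (x i) (x (S i)) ltac:(apply Hxab; lia) ltac:(apply Hxab; lia)).
    assert (Xa : x (i-1)%nat < x i) by (apply Hxlt; lia).
    assert (Xb : x i < x (S i)) by (apply Hxlt; lia).
    rewrite (Rabs_right (x i - x (i-1)%nat)) in L1 by lra. rewrite (Rabs_left (x i - x (S i))) in L2 by lra.
    assert (Ha1 : x i - x (i-1)%nat <= db).
    { replace i with (S (i-1)) at 1 by lia. apply HL. lia. }
    assert (Ha2 : x (S i) - x i <= db) by (apply HL; lia).
    assert (d1 := Hdel i ltac:(lia)). assert (d2 := Hdel (S i) ltac:(lia)).
    apply abs_le in G. apply abs_le in L1. apply abs_le in L2.
    unfold rh in Er. rewrite Er. clear Er.
    set (g := gradA rho xi K x i) in *.
    set (p0 := Derive rho (x (i-1)%nat)) in *. set (p1 := Derive rho (x i)) in *.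
    set (p2 := Derive rho (x (S i))) in *.
    set (e1 := delta xi i) in *. set (e2 := delta xi (S i)) in *.
    set (l1 := x i - x (i-1)%nat) in *. set (l2 := x (S i) - x i) in *.
    assert (l2' : - (x i - x (S i)) = l2) by (unfold l2; ring). rewrite l2' in L2.
    assert (M1 : kappa * l1 * e1 <= kappa * db * e1).
    { apply Rmult_le_compat_r; [lra|]. apply Rmult_le_compat_l; lra. }
    assert (M2 : kappa * l2 * e2 <= kappa * db * e2).
    { apply Rmult_le_compat_r; [lra|]. apply Rmult_le_compat_l; lra. }
    assert (N1 : - (kappa * l1 * e1) <= e1 * (p1 - p0) <= kappa * l1 * e1).
    { split; nra. }
    assert (N2 : - (kappa * l2 * e2) <= e2 * (p1 - p2) <= kappa * l2 * e2).
    { split; nra. }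
    unfold Dd. fold e1 e2.
    apply Rabs_le.
    split; nra. }
  rewrite sum1_ms1.
  rewrite (ms1_ext _ (fun i => ms1 (fun j => nu i * Wmat xi i j * nu j) n)).
  2:{ intros i Hi. apply sum1_ms1. }
  assert (Qeq : ms1 (fun i => ms1 (fun j => nu i * Wmat xi i j * nu j) n) n = ms1 (fun i => nu i * r i) n).
  { apply ms1_ext. intros i Hi. unfold r. rewrite <- ms1_scal. apply ms1_ext. intros; ring. }
  rewrite Qeq.
  assert (Hlow : ms1 (fun i => Dd i * nu i ^2 / 6) n <= ms1 (fun i => nu i * r i) n).
  { rewrite <- Qeq. eapply Rle_trans; [| apply (gersh (Wmat xi) nu n (Wmat_sym xi))].
    apply ms1_le. intros i Hi.
    assert (Hoff := offdiag xi n i Hi (Hdel i ltac:(lia)) (Hdel (S i) ltac:(lia))).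
    assert (Wii : Wmat xi i i = Dd i / 3) by (unfold Wmat, Dd; rewrite Nat.eqb_refl; reflexivity).
    rewrite Wii. unfold Dd in *.
    assert (0 <= nu i ^ 2) by apply pow2_ge_0.
    set (S0 := ms1 (fun j => if (i =? j)%nat then 0 else Rabs (Wmat xi i j)) n) in *.
    assert (nu i ^ 2 * ((delta xi i + delta xi (S i)) / 6) <= nu i ^ 2 * ((delta xi i + delta xi (S i)) / 3 - S0))
      by (apply Rmult_le_compat_l; lra).
    lra. }
  assert (Hup : ms1 (fun i => nu i * r i) n <= ms1 (fun i => Dd i * nu i^2/12) n + 12*kappa^2*db^2 * ms1 Dd n).
  { rewrite <- ms1_scal, <- ms1_plus. apply ms1_le. intros i Hi.
    assert (R1 := Hrb i Hi).
    assert (Dp : 0 < Dd i) by (unfold Dd; assert (H1 := Hdel i ltac:(lia)); assert (H2 := Hdel (S i) ltac:(lia)); lra).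
    set (B := 2 * kappa * db) in *.
    assert (B0 : 0 <= B) by (unfold B; nra).
    assert (E1 : nu i * r i <= Rabs (nu i) * Rabs (r i)) by (rewrite <- Rabs_mult; apply Rle_abs).
    assert (E2 : Rabs (nu i) * Rabs (r i) <= Rabs (nu i) * (B * Dd i)) by (apply Rmult_le_compat_l; [apply Rabs_pos| lra]).
    assert (E3 : Rabs (nu i) * B <= nu i ^ 2 / 12 + 3 * B ^ 2).
    { assert (Hs : Rabs (nu i) ^ 2 = nu i ^ 2) by (rewrite <- Rsqr_pow2, <- Rsqr_abs, Rsqr_pow2; reflexivity).
      assert (0 <= (Rabs (nu i) - 6 * B) ^ 2) by apply pow2_ge_0. nra. }
    assert (E4 : Rabs (nu i) * B * Dd i <= (nu i ^ 2 / 12 + 3 * B ^ 2) * Dd i) by (apply Rmult_le_compat_r; lra).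
    assert (E5: Rabs (nu i) * (B * Dd i) = Rabs (nu i) * B * Dd i) by ring.
    assert (E6: (nu i^2/12 + 3*B^2)*Dd i = Dd i * nu i^2/12 + 12*kappa^2*db^2*Dd i) by (unfold B; field).
    lra. }
  assert (HDs : ms1 Dd n <= 2 * M).
  { unfold Dd. rewrite ms1_plus.
    rewrite (ms1_ext (fun i => delta xi i) (fun i => xi i - xi (i-1)%nat)) by (intros; reflexivity).
    rewrite (ms1_ext (fun i => delta xi (S i)) (fun i => xi (S i) - xi i)).
    2:{ intros. unfold delta. replace (S j - 1)%nat with j by lia. reflexivity. }
    rewrite tele1, tele2. rewrite <- HKn, HKM.
    assert (xi n <= xi K) by (apply Hle; lia). assert (xi 0%nat <= xi 1%nat) by (apply Hle; lia). lra. }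
  assert (Hhalf : ms1 (fun i => Dd i * nu i^2/12) n = / 2 * ms1 (fun i => Dd i * nu i ^2 / 6) n).
  { rewrite <- ms1_scal. apply ms1_ext. intros; field. }
  assert (Hk2 : 0 <= 12 * kappa ^ 2 * db ^ 2) by (assert (0 <= kappa^2) by apply pow2_ge_0; assert (0 <= db^2) by apply pow2_ge_0; nra).
  assert (HQ : ms1 (fun i => nu i * r i) n <= 48 * kappa ^ 2 * M * db ^ 2).
  { assert (12 * kappa ^ 2 * db ^ 2 * ms1 Dd n <= 12 * kappa ^ 2 * db ^ 2 * (2 * M)) by (apply Rmult_le_compat_l; lra).
    lra. }
  assert (Hal : 1 <= alpha xi K).
  { unfold alpha. set (f := fun k => delta xi (S k)).
    assert (Hmin : 0 < minupto f (K-1)).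
    { apply minupto_pos. intros k Hk'. unfold f. apply Hdel. lia. }
    apply dge1; [exact Hmin|].
    assert (minupto f (K-1) <= f 0%nat) by (apply minupto_le; lia).
    assert (f 0%nat <= maxupto f (K-1)) by (apply maxupto_ge; lia). lra. }
  assert (0 <= 48 * kappa ^ 2 * M * db ^ 2) by nra.
  assert (48 * kappa ^ 2 * M * db ^ 2 * 1 <= 48 * kappa ^ 2 * M * db ^ 2 * alpha xi K) by (apply Rmult_le_compat_l; lra).
  nra.
Qed.
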